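(* Let $n_*>2$ be an integer, $\phi:(n_*,+\infty)\to(0,+\infty)$ strictly increasing with $\phi(n_*+1)>1$, and $\mathsf{G}\in\mathbb{G}(n_*,\phi)$. Then for all $\theta,\alpha>0$, $$\mathit{\Theta}(\alpha,\theta)\le n_*^\theta(e^\alpha+1)T_o(\alpha,\theta),$$ where $T_x(\alpha,\theta)=\sum_{y\in\mathsf{V}}[n(y)]^{1+\theta}\exp[-\alpha\rho(x,y)]$.
   Context: $\mathsf{G}=(\mathsf{V},\mathsf{E})$ is a countable, connected, locally finite undirected graph; $n(x)$ is the degree, $\rho$ the path distance, $o\in\mathsf{V}$ a fixed root. $\mathit{\Theta}(\alpha,\theta)=\sum_{x}\sum_{y\sim x}[n(x)n(y)]^\theta\exp[-\alpha\rho(o,x)]$ (values in $[0,\infty]$). For integer $n_*>2$, $\mathsf{V}_*=\{x:n(x)\le n_*\}$, $\mathsf{V}_*^c=\mathsf{V}\setminus\mathsf{V}_*$. For strictly increasing $\phi:(n_*,+\infty)\to(0,+\infty)$, $\mathbb{G}(n_*,\phi)$ is the family of graphs with $\rho(x,y)\ge\phi[\max\{n(x),n(y)\}]$ for all $x,y\in\mathsf{V}_*^c$. *)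

(* Defs.v *)
From HB Require Import structures.
From mathcomp Require Import all_boot all_order all_algebra.
From mathcomp Require Import all_classical all_reals all_analysis.
Set Implicit Arguments. Unset Strict Implicit. Unset Printing Implicit Defensive.
Import Order.TTheory GRing.Theory Num.Theory.
Local Open Scope classical_set_scope.
Local Open Scope ring_scope.

(* A locally finite simple undirected graph on a countable vertex type V is
   given by its neighbour lists: nbr x is the (duplicate-free, finite) list of
   neighbours of x.  Adjacency y ~ x means y \in nbr x. *)
Definition simple_lf_graph (V : countType) (nbr : V -> seq V) : Prop :=
  [/\ forall x, uniq (nbr x),
      forall x, x \notin nbr x &
      forall x y, (y \in nbr x) = (x \in nbr y)].

Definition deg (V : countType) (nbr : V -> seq V) (x : V) : nat := size (nbr x).

Definition walk (V : countType) (nbr : V -> seq V) (x y : V) (k : nat) : Prop :=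
  exists p : seq V, [/\ size p = k, path (fun a b => b \in nbr a) x p & last x p = y].

Definition connected_graph (V : countType) (nbr : V -> seq V) : Prop :=
  forall x y, exists k, walk nbr x y k.

(* path distance rho(x,y): the least length of a walk from x to y
   (well defined for connected graphs; defaults to 0 otherwise) *)
Definition rho (V : countType) (nbr : V -> seq V) (x y : V) : nat :=
  xget 0%N [set k | walk nbr x y k /\ forall j, walk nbr x y j -> (k <= j)%N].

Definition Vstar (V : countType) (nbr : V -> seq V) (nstar : nat) : set V :=
  [set x | (deg nbr x <= nstar)%N].

Definition admissible_phi (R : realType) (nstar : nat) (phi : R -> R) : Prop :=
  (forall s t : R, nstar%:R < s -> s < t -> phi s < phi t) /\
  (forall s : R, nstar%:R < s -> 0 < phi s).

Definition in_class (R : realType) (V : countType) (nbr : V -> seq V)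
    (nstar : nat) (phi : R -> R) : Prop :=
  forall x y, x <> y -> ~ Vstar nbr nstar x -> ~ Vstar nbr nstar y ->
    phi (maxn (deg nbr x) (deg nbr y))%:R <= (rho nbr x y)%:R.

Definition Theta (R : realType) (V : countType) (nbr : V -> seq V) (o : V)
    (alpha theta : R) : \bar R :=
  \esum_(x in [set: V]) \esum_(y in [set y | y \in nbr x])
    (((deg nbr x * deg nbr y)%:R `^ theta) * expR (- alpha * (rho nbr o x)%:R))%:E.

Definition Tsum (R : realType) (V : countType) (nbr : V -> seq V) (x : V)
    (alpha theta : R) : \bar R :=
  \esum_(y in [set: V])
    (((deg nbr y)%:R `^ (1 + theta)) * expR (- alpha * (rho nbr x y)%:R))%:E.

(* Main.v *)
Require Import Defs.
From HB Require Import structures.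
From mathcomp Require Import all_boot all_order all_algebra.
From mathcomp Require Import all_classical all_reals all_analysis.
From mathcomp Require Import lra ring.
Import Order.TTheory GRing.Theory Num.Theory.
Local Open Scope classical_set_scope.
Local Open Scope ring_scope.
Lemma esumZ (R : realType) (T : choiceType) (I : set T) (c : R) (a : T -> \bar R) :
  (0 < c)%R -> (forall i, I i -> (0 <= a i)%E) ->
  (\esum_(i in I) (c%:E * a i) = c%:E * \esum_(i in I) a i)%E.
Proof.
move=> c0 a0; rewrite /esum -ereal_sup_pZl//; congr ereal_sup.
have H X : finite_set X -> X `<=` I ->
    (\sum_(i \in X) (c%:E * a i) = c%:E * \sum_(i \in X) a i)%E.
  move=> finX XI; rewrite !fsbig_finite// big_seq [in RHS]big_seq ge0_sume_distrr// => i.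
  by rewrite in_fset_set// inE => /XI; exact: a0.
apply/seteqP; split => y.
- case=> X [finX XI] <-; exists (\sum_(i \in X) a i)%E; first by exists X.
  by rewrite H.
- case=> _ [X [finX XI] <-] <-; exists X => //; by rewrite H.
Qed.

Section G.
Variables (V : countType) (nbr : V -> seq V).
Hypothesis conn : connected_graph nbr.

Lemma rho_spec x y : walk nbr x y (rho nbr x y) /\
  forall j, walk nbr x y j -> (rho nbr x y <= j)%N.
Proof.
rewrite /rho; set S := [set k | _].
suff : S (xget 0%N S) by [].
apply: xgetPex.
have ex : exists k, `[< walk nbr x y k >] by have [k h] := conn x y; exists k; apply/asboolP.
case: (ex_minnP ex) => m /asboolP wm mmin.
by exists m; split => // j /asboolP /mmin.
Qed.

Lemma rho_le x y k : walk nbr x y k -> (rho nbr x y <= k)%N.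
Proof. by case: (rho_spec x y) => _; apply. Qed.

Lemma rho_adj x y : y \in nbr x -> (rho nbr x y <= 1)%N.
Proof. by move=> h; apply: rho_le; exists [:: y]; rewrite /= h. Qed.

Lemma rho_step o x y : x \in nbr y -> (rho nbr o x <= (rho nbr o y).+1)%N.
Proof.
move=> h; apply: rho_le; case: (rho_spec o y) => [[p [sp pp lp]] _].
exists (rcons p x); rewrite size_rcons sp rcons_path pp lp last_rcons; split => //.
Qed.
End G.

Lemma key (R : realType) (V : countType) (nbr : V -> seq V) (o : V)
    (nstar : nat) (phi : R -> R) :
  simple_lf_graph nbr -> connected_graph nbr ->
  admissible_phi nstar phi -> 1 < phi (nstar.+1)%:R ->
  in_class nbr nstar phi ->
  forall theta alpha : R, 0 < theta -> 0 < alpha ->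
  forall x y, y \in nbr x ->
  (deg nbr x * deg nbr y)%:R `^ theta * expR (- alpha * (rho nbr o x)%:R) <=
  nstar%:R `^ theta * ((deg nbr x)%:R `^ theta * expR (- alpha * (rho nbr o x)%:R)) +
  nstar%:R `^ theta * expR alpha * ((deg nbr y)%:R `^ theta * expR (- alpha * (rho nbr o y)%:R)).
Proof.
move=> [uq irr sym] conn [phiinc phipos] phi1 cls theta alpha th0 al0 x y hy.
have Ag z : 0 <= (deg nbr z)%:R `^ theta * expR (- alpha * (rho nbr o z)%:R).
  by rewrite mulr_ge0 ?powR_ge0 ?expR_ge0.
have cg : 0 <= nstar%:R `^ theta :> R by rewrite powR_ge0.
have eg : 0 <= expR alpha :> R by rewrite expR_ge0.
rewrite natrM powRM //.
have rx : ((rho nbr o y)%:R <= (rho nbr o x)%:R + 1 :> R).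
  by rewrite natr1 ler_nat; apply: rho_step.
have cmp (a : nat) : (a <= nstar)%N -> a%:R `^ theta <= nstar%:R `^ theta :> R.
  by move=> h; apply: (ge0_ler_powR (ltW th0)); rewrite ?nnegrE ?ler_nat ?ler0n.
case: (leqP (deg nbr x) nstar) => hx.
  have h1 := cmp _ hx.
  have h2 : expR (- alpha * (rho nbr o x)%:R) <= expR alpha * expR (- alpha * (rho nbr o y)%:R).
    rewrite -expRD ler_expR.
    have q : 0 <= alpha * ((rho nbr o x)%:R + 1 - (rho nbr o y)%:R) by rewrite mulr_ge0 ?subr_ge0 // ltW.
    nra.
  have h3 : 0 <= (deg nbr y)%:R `^ theta :> R by apply: powR_ge0.
  have h4 : 0 <= expR (- alpha * (rho nbr o x)%:R) :> R by apply: expR_ge0.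
  have h5 : 0 <= (deg nbr x)%:R `^ theta :> R by apply: powR_ge0.
  have h6 : 0 <= expR (- alpha * (rho nbr o y)%:R) :> R by apply: expR_ge0.
  set a1 := (deg nbr x)%:R `^ theta in h1 h5 *.
  set a2 := (deg nbr y)%:R `^ theta in h3 *.
  set e1 := expR (- alpha * (rho nbr o x)%:R) in h2 h4 *.
  set e2 := expR (- alpha * (rho nbr o y)%:R) in h2 h6 *.
  set c := nstar%:R `^ theta in h1 cg *.
  set ea := expR alpha in h2 eg *.
  have : a1 * a2 * e1 <= c * a2 * (ea * e2).
    apply: ler_pM; rewrite ?mulr_ge0 //; exact: ler_pM.
  have : 0 <= c * (a1 * e1) by rewrite !mulr_ge0.
  move=> p q; apply: (le_trans q); rewrite [X in X <= _](_ : _ = c*ea*(a2*e2)); last by ring.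
  by rewrite -[X in X <= _]add0r lerD.
case: (leqP (deg nbr y) nstar) => hy'.
  have h1 := cmp _ hy'.
  have h3 : 0 <= (deg nbr x)%:R `^ theta :> R by apply: powR_ge0.
  have h4 : 0 <= expR (- alpha * (rho nbr o x)%:R) :> R by apply: expR_ge0.
  have : 0 <= nstar%:R `^ theta * expR alpha * ((deg nbr y)%:R `^ theta * expR (- alpha * (rho nbr o y)%:R)).
    by rewrite !mulr_ge0.
  move=> p; rewrite -[X in X <= _]addr0; apply: lerD => //.
  rewrite [X in _ <= X](_ : _ = (deg nbr x)%:R `^ theta * nstar%:R `^ theta * expR (- alpha * (rho nbr o x)%:R)); last by ring.
  apply: ler_wpM2r => //; apply: ler_wpM2l => //.
exfalso.
have xy : x <> y by move=> e; move: hy; rewrite -e (negbTE (irr x)).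
have nx : ~ Vstar nbr nstar x by rewrite /Vstar /= leqNgt hx.
have ny : ~ Vstar nbr nstar y by rewrite /Vstar /= leqNgt hy'.
have := cls x y xy nx ny.
have r1 : ((rho nbr x y)%:R <= 1 :> R) by rewrite -[1]/(1%:R) ler_nat; apply: rho_adj.
set m := maxn _ _.
have hm : (nstar.+1 <= m)%N by rewrite leq_max hx.
have : phi (nstar.+1)%:R <= phi m%:R.
  move: hm; rewrite leq_eqVlt => /orP[/eqP <- //|hm].
  apply/ltW/phiinc; by rewrite ltr_nat.
move=> p q; have := le_trans p (le_trans q r1); rewrite leNgt phi1 //.
Qed.

Theorem lemma5p3 (R : realType) (V : countType) (nbr : V -> seq V) (o : V)
    (nstar : nat) (phi : R -> R) :
  simple_lf_graph nbr -> connected_graph nbr ->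
  (2 < nstar)%N ->
  admissible_phi nstar phi -> 1 < phi (nstar.+1)%:R ->
  in_class nbr nstar phi ->
  forall theta alpha : R, 0 < theta -> 0 < alpha ->
  (Theta nbr o alpha theta <=
     ((nstar%:R `^ theta) * (expR alpha + 1))%:E * Tsum nbr o alpha theta)%E.
Proof.
move=> G conn n2 adm phi1 cls theta alpha th0 al0.
have K := @key R V nbr o nstar phi G conn adm phi1 cls theta alpha th0 al0.
case: G => uq irr sym.
set c := nstar%:R `^ theta.
pose A z := (deg nbr z)%:R `^ theta * expR (- alpha * (rho nbr o z)%:R).
have Ag z : 0 <= A z by rewrite mulr_ge0 ?powR_ge0 ?expR_ge0.
have cg : 0 <= c by rewrite powR_ge0.
have eg : 0 <= expR alpha :> R by rewrite expR_ge0.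
set E := [set: V] `*`` (fun x => [set y | y \in nbr x]).
rewrite /Theta esum_esum; last by move=> *; rewrite lee_fin mulr_ge0 ?powR_ge0 ?expR_ge0.
apply: (le_trans (le_esum (b := fun k => ((c * A k.1)%:E + (c * expR alpha * A k.2)%:E)%E) _)).
  by move=> [x y] [_ /= hy]; rewrite -EFinD lee_fin; exact: K.
rewrite esumD; last 2 first.
- by move=> *; rewrite lee_fin mulr_ge0.
- by move=> *; rewrite lee_fin !mulr_ge0.
have sw : (\esum_(k in E) (c * expR alpha * A k.2)%:E = \esum_(k in E) (c * expR alpha * A k.1)%:E)%E.
  have imE : (fun k : V * V => (k.2, k.1)) @` E = E.
    apply/seteqP; split => [_ [[x y] [_ /= h] <-]|[x y] [_ /= h]].
      by split => //=; rewrite -sym.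
    by exists (y, x) => //; split => //=; rewrite -sym.
  rewrite -[in LHS]imE esum_image //.
  by move=> [a b] [a' b'] _ _ [-> ->].
have col (g : V -> R) : (forall x, 0 <= g x) ->
    (\esum_(k in E) (g k.1)%:E = \esum_(x in [set: V]) ((deg nbr x)%:R * g x)%:E)%E.
  move=> g0; rewrite /E -(esum_esum (a := fun x _ => (g x)%:E)) /=; last by move=> *; rewrite lee_fin.
  apply: eq_esum => x _.
  rewrite esum_fset; first last.
  - by move=> *; rewrite lee_fin.
  - exact: finite_seq.
  rewrite -fsbig_seq // sumEFin big_const_seq count_predT iter_addr_0 mulr_natl.
  by [].
rewrite sw -/E (col (fun z => c * A z)); last by move=> z; rewrite mulr_ge0.
rewrite (col (fun z => c * expR alpha * A z)); last by move=> z; rewrite !mulr_ge0.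
rewrite -esumD; last 2 first.
- by move=> *; rewrite lee_fin !mulr_ge0.
- by move=> *; rewrite lee_fin !mulr_ge0.
rewrite /Tsum -esumZ; first last.
- by move=> *; rewrite lee_fin mulr_ge0 ?powR_ge0 ?expR_ge0.
- by rewrite mulr_gt0 ?powR_gt0 ?ltr0n ?ltr_pwDl ?expR_gt0 //; apply: (ltn_trans _ n2).
apply: le_esum => x _; rewrite -EFinD lee_fin.
have h1t : 0 < 1 + theta by rewrite addr_gt0.
rewrite powRD; last by rewrite gt_eqF.
rewrite powRr1 ?ler0n // /A.
by rewrite le_eqVlt; apply/orP; left; apply/eqP; ring.
Qed.
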